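(* For $n\ge 1$ let $\bm{N}=(1,1,\ldots,1,-n)\in\mathbb{Z}^{n+1}$ and $c_n:=K_n(\bm{N})$. Then, as $n\to\infty$, \[ \log c_n \;\geq\; \frac{n}{4}\log^2 n - O(n\log n). \] Furthermore, $c_n \geq (n+1)^{n-1}$ for all $n\geq 3000$.
   Context: For an integer $n\ge1$ and $\bm{N}=(N_0,\ldots,N_{n-1},N_n)\in\mathbb{Z}^{n+1}$ with $N_n=-\sum_{i<n}N_i$, the flow polytope $\mathcal{F}_n(\bm{N})$ is the set of $\bm{f}=(f_{ij})_{0\le i<j\le n}\in\mathbb{R}_{\ge0}^{\binom{n+1}{2}}$ such that for each vertex $i\in\{0,\ldots,n\}$, $\sum_{j>i} f_{ij}-\sum_{k<i} f_{ki}=N_i$ (flows on the complete directed acyclic graph on $\{0,\ldots,n\}$ with edges $i\to j$ for $i<j$). $K_n(\bm{N})$ denotes the number of integer points of $\mathcal{F}_n(\bm{N})$ (the Kostant partition function). $\log$ is the natural logarithm. *)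

(* Defs.v *)
From mathcomp Require Import all_boot all_order all_algebra.
Set Implicit Arguments. Unset Strict Implicit. Unset Printing Implicit Defensive.
Import GRing.Theory Num.Theory.

(* A bound on every edge value of an integer flow with netflow vector N:
   by path decomposition of flows on a DAG, every f_ij <= sum of positive N_i
   <= sum_i |N_i|.  So enumerating flows with values in 'I_(flow_bound N).+1
   enumerates ALL integer points of the flow polytope. *)
Definition flow_bound (n : nat) (N : 'I_n.+1 -> int) : nat :=
  (\sum_(i < n.+1) `|N i|)%N.

(* f is an integer point of F_n(N): f_ij = 0 unless i < j (nonnegativity is
   built into nat), and for each vertex i:
   sum_{j>i} f_ij - sum_{k<i} f_ki = N_i. *)
Definition is_int_flow (n : nat) (N : 'I_n.+1 -> int)
    (f : {ffun 'I_n.+1 * 'I_n.+1 -> 'I_(flow_bound N).+1}) : bool :=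
  [forall i : 'I_n.+1, forall j : 'I_n.+1, (j <= i)%N ==> (nat_of_ord (f (i, j)) == 0%N)]
  && [forall i : 'I_n.+1,
        ((\sum_(j < n.+1 | (i < j)%N) (nat_of_ord (f (i, j))))%:Z
         - (\sum_(k < n.+1 | (k < i)%N) (nat_of_ord (f (k, i))))%:Z == N i)%R].

Definition K (n : nat) (N : 'I_n.+1 -> int) : nat :=
  #|[set f | @is_int_flow n N f]|.

Definition Nvec (n : nat) (i : 'I_n.+1) : int :=
  if nat_of_ord i == n then (- (n%:Z))%R else 1%R.

Definition c (n : nat) : nat := @K n (@Nvec n).

(* Main.v *)
Require Import Defs.
From Stdlib Require Import Reals.
From Stdlib Require Import Lra Lia PeanoNat.
From mathcomp Require all_boot all_order all_algebra zify.

Module Comb.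
Import all_boot all_order all_algebra zify.
Set Implicit Arguments. Unset Strict Implicit. Unset Printing Implicit Defensive.
Import GRing.Theory Num.Theory.

Lemma interval_count m u v :
  \sum_(a < m) ((a <= u) && (u < a + v)) <= v.
Proof.
suff : \sum_(a < m) ((a <= u) && (u < a + v)) <= minn v (m - (u.+1 - v)) by lia.
elim: m => [|m IH]; first by rewrite big_ord0.
rewrite big_ord_recr /=.
move: IH; set S := \sum_(_ < m) _ => IH.
case: (boolP ((m <= u) && (u < m + v))) => /= H; last by lia.
move/andP: H => [H1 H2]; lia.
Qed.

Lemma sum_if_eq N (v : nat) (X : nat -> nat) :
  \sum_(j < N) (if (j : nat) == v then X (j : nat) else 0) = if v < N then X v else 0.
Proof.
case: ifP => hv.
  rewrite (bigD1 (Ordinal hv)) //= eqxx big1 ?addn0 // => j /eqP hj.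
  case: ifP => // /eqP hjv; case: hj; apply: val_inj => /=; done.
rewrite big1 // => j _; case: ifP => // /eqP hjv.
by move: (ltn_ord j); rewrite hjv hv.
Qed.

Section Fam.
Variables (n w m : nat).
Hypothesis hm : w * w.+1 + m + w <= n.

Definition kp (p : 'I_m * 'I_w) : nat := w * w.+1 + p.1.
Definition jp (p : 'I_m * 'I_w) : nat := w * w.+1 + p.1 + 2 + p.2.

Lemma kp_jp p : kp p < jp p.
Proof. rewrite /kp /jp; lia. Qed.

Lemma kp_jp2 p : kp p + 2 <= jp p.
Proof. rewrite /kp /jp; lia. Qed.

Lemma jp_le p : jp p <= n.
Proof. rewrite /jp; have := ltn_ord p.1; have := ltn_ord p.2; lia. Qed.

Lemma kpjp_inj p q : kp p = kp q -> jp p = jp q -> p = q.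
Proof.
rewrite /kp /jp => h1 h2.
case: p q h1 h2 => [a d] [a' d'] /= h1 h2.
have ea : a = a' by apply: val_inj => /=; lia.
have ed : d = d' by apply: val_inj => /=; lia.
by rewrite ea ed.
Qed.

Definition cross (t : {ffun 'I_m * 'I_w -> bool}) (i : nat) : nat :=
  \sum_(p | t p) ((kp p <= i) && (i < jp p)).

Definition gg (t : {ffun 'I_m * 'I_w -> bool}) (k j : nat) : nat :=
  (if j == k.+1 then k.+1 - cross t k else 0) +
  \sum_(p | t p) ((k == kp p) && (j == jp p)).

Lemma cross_le t i : cross t i <= i.
Proof.
rewrite /cross.
apply: (@leq_trans (\sum_p ((kp p <= i) && (i < jp p)))).
  rewrite [X in _ <= X](bigID (fun p => t p)) /=; exact: leq_addr.
case: (ltnP i (w * w.+1)) => hi.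
  rewrite big1 // => p _; rewrite /kp; case: leqP => //= ?; lia.
rewrite -(pair_bigA _ (fun a d => ((kp (a,d) <= i) && (i < jp (a,d)) : nat))) /=.
rewrite exchange_big /=.
apply: (@leq_trans (\sum_(d < w) w.+1)); last first.
  rewrite sum_nat_const card_ord; lia.
apply: leq_sum => d _.
apply: (@leq_trans (\sum_(a < m) ((a <= i - w * w.+1) && (i - w * w.+1 < a + (d + 2))))).
  apply: leq_sum => a _; rewrite /kp /jp /=.
  case: (boolP ((w * w.+1 + a <= i) && (i < w * w.+1 + a + 2 + d))) => //= /andP [h1 h2].
  have -> : (a <= i - w * w.+1) = true by apply/idP; lia.
  have -> : (i - w * w.+1 < a + (d + 2)) = true by apply/idP; lia.
  done.
apply: leq_trans (interval_count _ _ _) _.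
have := ltn_ord d; lia.
Qed.

Lemma cross_n t : cross t n = 0.
Proof.
rewrite /cross big1 // => p _; have := jp_le p; lia.
Qed.

Lemma cross_step t i :
  cross t i.+1 + \sum_(p | t p) (i.+1 == jp p) = cross t i + \sum_(p | t p) (i.+1 == kp p).
Proof.
rewrite /cross -!big_split /=; apply: eq_bigr => p _.
have := kp_jp p; lia.
Qed.

Lemma cross_0 t : cross t 0 = \sum_(p | t p) (0 == kp p).
Proof.
rewrite /cross; apply: eq_bigr => p _; have := kp_jp p; lia.
Qed.


Lemma gg_low t k j : j <= k -> gg t k j = 0.
Proof.
move=> hjk; rewrite /gg.
have -> : (j == k.+1) = false by apply/negbTE; lia.
rewrite add0n big1 // => p _; have := kp_jp p; lia.
Qed.

Lemma sum_match_le1 t k j : \sum_(p | t p) ((k == kp p) && (j == jp p)) <= 1.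
Proof.
case: (pickP (fun p => t p && ((k == kp p) && (j == jp p)))) => [p0 /andP [tp0 /andP [/eqP e1 /eqP e2]]|hn].
  rewrite (bigD1 p0) //= big1 ?addn0; first by rewrite e1 e2 !eqxx.
  move=> q /andP [_ hq]; case: (boolP ((k == kp q) && (j == jp q))) => //= /andP [/eqP f1 /eqP f2].
  by move: hq; rewrite (kpjp_inj (esym (etrans (esym e1) f1)) (esym (etrans (esym e2) f2))) eqxx.
rewrite big1 // => p tp; have := hn p; rewrite tp /= => ->; done.
Qed.

Lemma gg_le t k j : 0 < n -> j <= n -> gg t k j <= n.
Proof.
move=> hn hj; rewrite /gg; case: eqP => [ej|nej].
  subst j; rewrite big1 ?addn0; first by move: (cross t k) => x; lia.
  move=> p _; have := kp_jp2 p; lia.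
have := sum_match_le1 t k j; lia.
Qed.

Lemma gg_kj t p : gg t (kp p) (jp p) = t p.
Proof.
rewrite /gg.
have -> : (jp p == (kp p).+1) = false by rewrite /kp /jp; apply/negbTE; lia.
rewrite add0n.
case tp: (t p).
  rewrite (bigD1 p) //= !eqxx big1 // => q /andP [_ hq].
  case: (boolP ((kp p == kp q) && (jp p == jp q))) => //= /andP [/eqP f1 /eqP f2].
  by move: hq; rewrite (kpjp_inj (esym f1) (esym f2)) eqxx.
rewrite big1 // => q tq.
case: (boolP ((kp p == kp q) && (jp p == jp q))) => //= /andP [/eqP f1 /eqP f2].
by move: tq; rewrite (kpjp_inj (esym f1) (esym f2)) tp.
Qed.

Lemma out_sum t i : i <= n ->
  \sum_(j < n.+1) gg t i j = (if i < n then i.+1 - cross t i else 0) + \sum_(p | t p) (i == kp p).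
Proof.
move=> hi; rewrite /gg big_split /=.
rewrite (sum_if_eq n.+1 i.+1 (fun _ => i.+1 - cross t i)) ltnS; congr (_ + _).
rewrite exchange_big /=; apply: eq_bigr => p _.
rewrite (eq_bigr (fun j : 'I_n.+1 => if (j : nat) == jp p then (fun _ => nat_of_bool (i == kp p)) (j : nat) else 0)).
  by rewrite (sum_if_eq n.+1 (jp p) (fun _ => nat_of_bool (i == kp p))) ltnS jp_le.
by move=> j _; case: (_ == jp p); rewrite ?andbT ?andbF.
Qed.

Lemma in_sum t i : i <= n ->
  \sum_(k < n.+1) gg t k i = (if 0 < i then i - cross t i.-1 else 0) + \sum_(p | t p) (i == jp p).
Proof.
move=> hi; rewrite /gg big_split /=; congr (_ + _).
  case: i hi => [|i] hi /=.
    by rewrite big1.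
  rewrite (eq_bigr (fun k : 'I_n.+1 => if (k : nat) == i then (fun k => k.+1 - cross t k) (k : nat) else 0)).
    by rewrite (sum_if_eq n.+1 i (fun k => k.+1 - cross t k)); have -> : i < n.+1 by lia.
  by move=> k _; rewrite eqSS eq_sym.
rewrite exchange_big /=; apply: eq_bigr => p _.
rewrite (eq_bigr (fun k : 'I_n.+1 => if (k : nat) == kp p then (fun _ => nat_of_bool (i == jp p)) (k : nat) else 0)).
  rewrite (sum_if_eq n.+1 (kp p) (fun _ => nat_of_bool (i == jp p))); have -> : kp p < n.+1 by have := kp_jp p; have := jp_le p; lia.
  done.
by move=> k _; case: (_ == kp p); rewrite ?andbT ?andbF.
Qed.

End Fam.

Lemma flow_bound_ge n : n <= flow_bound (@Nvec n).
Proof.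
rewrite /flow_bound big_ord_recr /= /Nvec /= eqxx.
rewrite abszN absz_nat; exact: leq_addl.
Qed.

Definition phi n w m (t : {ffun 'I_m * 'I_w -> bool}) :
  {ffun 'I_n.+1 * 'I_n.+1 -> 'I_(flow_bound (@Nvec n)).+1} :=
  [ffun e : 'I_n.+1 * 'I_n.+1 => inord (gg t e.1 e.2)].

Arguments phi n {w m} t.

Lemma phiE n w m (hm : w * w.+1 + m + w <= n) (hn : 0 < n) (t : {ffun 'I_m * 'I_w -> bool}) (e : 'I_n.+1 * 'I_n.+1) :
  nat_of_ord (phi n t e) = gg t e.1 e.2.
Proof.
rewrite ffunE inordK //; apply: leq_trans (flow_bound_ge n).
apply: (gg_le hm) => //; rewrite -ltnS; exact: ltn_ord.
Qed.

Lemma int_sub1 (a b : nat) : a = b + 1 -> ((a%:Z - b%:Z) == 1)%R.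
Proof. by move=> ->; rewrite PoszD addrAC subrr add0r. Qed.

Lemma int_subn (a b n : nat) : a = 0 -> b = n -> ((a%:Z - b%:Z) == - n%:Z)%R.
Proof. by move=> -> ->; rewrite sub0r. Qed.

Lemma phi_flow n w m (hm : w * w.+1 + m + w <= n) (hn : 0 < n) (t : {ffun 'I_m * 'I_w -> bool}) :
  is_int_flow (phi n t).
Proof.
apply/andP; split.
  apply/forallP => i; apply/forallP => j; apply/implyP => hji.
  by rewrite phiE // (gg_low hm).
apply/forallP => i.
have hi : (i : nat) <= n by rewrite -ltnS.
rewrite (eq_bigr (fun j : 'I_n.+1 => gg t i j)); last by move=> j _; rewrite phiE.
rewrite [X in (_ - X%:Z)%R](eq_bigr (fun k : 'I_n.+1 => gg t k i)); last by move=> k _; rewrite phiE.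
rewrite big_mkcond /= (eq_bigr (fun j : 'I_n.+1 => gg t i j)); last first.
  move=> j _; case: ifP => // /negbT; rewrite -leqNgt => h; by rewrite (gg_low hm).
rewrite [X in (_ - X%:Z)%R](big_mkcond) /=; rewrite [X in (_ - X%:Z)%R](eq_bigr (fun k : 'I_n.+1 => gg t k i)); last first.
  move=> k _; case: ifP => // /negbT; rewrite -leqNgt => h; by rewrite (gg_low hm).
rewrite (out_sum hm) // (in_sum hm) //.
rewrite /Nvec.
have hstep := cross_step hm t.
have hle := cross_le hm t.
case: (ltngtP i n) => [hin | hni |ein]; [ | by move: hni; rewrite ltnNge hi | ]; last first.
  rewrite ?ein ?eqxx ?ltnn /= hn.
  have := hstep n.-1; rewrite prednK // (cross_n hm).
  have -> : \sum_(p | t p) (n == kp p) = 0.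
    by rewrite big1 // => p _; have := kp_jp hm p; have := jp_le hm p; lia.
  have := hle n.-1.
  set A := \sum_(p | t p) (n == jp p); set X := cross t n.-1.
  move=> hX hs; apply: int_subn; lia.
case: (posnP i) => [i0|ipos].
  rewrite i0 /=.
  have := hle 0; rewrite (cross_0 hm) => h0.
  have -> : \sum_(p | t p) (0 == jp p) = 0.
    by rewrite big1 // => p _; have := kp_jp hm p; lia.
  apply: int_sub1; move: h0; set A := \sum_(p | t p) (0 == kp p) => h0; lia.

have := hstep (i : nat).-1; rewrite prednK // => hs.
have := hle i; have := hle (i : nat).-1.
move: hs; set A := \sum_(p | t p) (_ == jp p); set B := \sum_(p | t p) (_ == kp p).
set X := cross t i; set Y := cross t (i : nat).-1.
move=> hs h1 h2; apply: int_sub1; lia.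
Qed.

Lemma phi_inj n w m (hm : w * w.+1 + m + w <= n) (hn : 0 < n) : injective (@phi n w m).
Proof.
move=> t1 t2 e; apply/ffunP => p.
have hk : kp p < n.+1 by have := kp_jp hm p; have := jp_le hm p; lia.
have hj : jp p < n.+1 by have := jp_le hm p; lia.
have := congr1 (fun f : {ffun 'I_n.+1 * 'I_n.+1 -> 'I_(flow_bound (@Nvec n)).+1} => nat_of_ord (f (Ordinal hk, Ordinal hj))) e.
rewrite /= !(phiE hm hn) /= !(gg_kj hm).
by case: (t1 p); case: (t2 p).
Qed.

Lemma c_lower n w : 0 < n -> w * w.+1 + w <= n -> 2 ^ ((n - w * w.+1 - w) * w) <= c n.
Proof.
move=> hn hw.
set m := n - w * w.+1 - w.
have hm : w * w.+1 + m + w <= n by rewrite /m; lia.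
have -> : 2 ^ (m * w) = #|{ffun 'I_m * 'I_w -> bool}|.
  by rewrite card_ffun card_prod !card_ord card_bool.
rewrite -(card_imset predT (phi_inj hm hn)) /c /K.
apply: subset_leq_card; apply/subsetP => f /imsetP [t _ ->].
by rewrite inE (phi_flow hm hn).
Qed.


Lemma powE a b : Nat.pow a b = expn a b.
Proof. elim: b => [|b IH] //=; by rewrite expnS IH. Qed.

Lemma poly12 k : 8 * (k+12) * (k+12) + 8*(k+12) + 1 <= 2 ^ (k+11).
Proof.
elim: k => [|k IH]; first by [].
rewrite (_ : k.+1 + 11 = (k + 11).+1); last lia.
rewrite expnS; move: IH; set X := 2 ^ (k + 11) => IH; nia.
Qed.

Lemma part2 n : 3000 <= n -> (n+1)^(n-1) <= c n.
Proof.
move=> hn.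
have [h1 h2] := Nat.log2_spec (n+1) (ltac:(lia)).
rewrite !powE in h1 h2.
move/leP: h1 => h1; move/ltP: h2 => h2.
set L := (Nat.log2 (n+1)).+1 in h2.
have h1' : 2 ^ L.-1 <= n + 1 by [].
have H8 : 8*L*L + 8*L <= n.
  case: (leqP L 18) => hL; first nia.
  have := poly12 (L - 12).
  rewrite (_ : L - 12 + 12 = L); last lia.
  rewrite (_ : L - 12 + 11 = L.-1); last lia.
  lia.
have hw : (2*L) * (2*L).+1 + 2*L <= n by nia.
apply: (leq_trans _ (@c_lower n (2*L) (ltac:(lia)) hw)).
apply: (@leq_trans ((2^L)^(n-1))).
  rewrite leq_exp2r; [lia | lia].
rewrite -expnM; apply: leq_pexp2l => //.
set D := n - 2 * L * (2 * L).+1 - 2 * L.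
have hD : n - 1 <= 2 * D by rewrite /D; nia.
have := leq_mul (leqnn L) hD.
nia.
Qed.

Lemma poly18 k : 2*(k+18)*(k+18)*(k+18)*(k+18) + 4*(k+18)*(k+18) <= 2^(k+18).
Proof.
elim: k => [|k IH].
  rewrite (_ : 2^(0+18) = 2^9 * 2^9); last by rewrite -expnD.
  rewrite (_ : 2^9 = 512) //.
rewrite (_ : k.+1 + 18 = (k + 18).+1); last lia.
rewrite expnS; move: IH; set X := 2 ^ (k + 18) => IH.
set y := k + 18. have hy : 18 <= y by rewrite /y; lia.
move: IH; rewrite -/y (_ : y.+1 = y + 1); last lia. move=> IH. nia.
Qed.

Lemma part1_nat n : 2^18 <= n -> exists l E,
  [/\ 2^E <= c n, n < 2^(l.+1) & n * (l.+1 * l.+1) <= 4 * E].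
Proof.
move=> hn.
have [h1 h2] := Nat.log2_spec n (ltac:(have := expn_gt0 2 18; lia)).
rewrite !powE in h1 h2.
move/leP: h1 => h1; move/ltP: h2 => h2.
set l := Nat.log2 n in h1 h2.
have hl : 18 <= l.
  case: (leqP 18 l) => // hl.
  have : 2 ^ l.+1 <= 2 ^ 18 by apply: leq_pexp2l.
  lia.
have hp := poly18 (l - 18).
rewrite (_ : l - 18 + 18 = l) in hp; last lia.
have hw : (l * l) * (l * l).+1 + l * l <= n by nia.
exists l, ((n - (l * l) * (l * l).+1 - l * l) * (l * l)); split => //.
  exact: (@c_lower n (l * l) (ltac:(lia)) hw).
set D := n - (l * l) * (l * l).+1 - l * l.
have hD : n <= 2 * D by rewrite /D; nia.
have A : n * (l.+1 * l.+1) <= n * (2 * (l * l)) by apply: leq_mul => //; nia.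
have B : n * (2 * (l * l)) <= 2 * D * (2 * (l * l)) by apply: leq_mul.
nia.
Qed.

Lemma part1_peano n : (Nat.pow 2 18 <= n)%coq_nat -> (1 <= n)%coq_nat /\ exists l E,
  (Nat.pow 2 E <= c n)%coq_nat /\ (n < Nat.pow 2 (S l))%coq_nat /\
  (Nat.mul n (Nat.mul (S l) (S l)) <= Nat.mul 4 E)%coq_nat.
Proof.
rewrite powE => /leP hn.
have [l [E [h1 h2 h3]]] := part1_nat hn.
split; first by apply/leP; apply: leq_trans hn; rewrite expn_gt0.
exists l, E; rewrite !powE; split; [apply/leP | split; [apply/ltP | apply/leP]] => //.
Qed.

Lemma part2_peano n : (3000 <= n)%coq_nat -> (Nat.pow (Nat.add n 1) (Nat.sub n 1) <= c n)%coq_nat.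
Proof. move/leP => h; rewrite powE; apply/leP; exact: part2 h. Qed.

End Comb.

Open Scope R_scope.

Lemma ln_le' x y : 0 < x -> x <= y -> ln x <= ln y.
Proof. intros hx hxy; destruct (Rle_lt_or_eq_dec _ _ hxy) as [h|h]. left; apply ln_increasing; lra. subst; lra. Qed.
Lemma ln2_lt1 : ln 2 < 1.
Proof. rewrite <- (ln_exp 1). apply ln_increasing; [lra|]. pose proof (exp_ineq1 1 R1_neq_R0). lra. Qed.
Lemma ln2_pos : 0 < ln 2.
Proof. rewrite <- ln_1. apply ln_increasing; lra. Qed.

Lemma INR_pow2 k : INR (Nat.pow 2 k) = 2 ^ k.
Proof. rewrite pow_INR. simpl. replace (1 + 1) with 2 by lra. reflexivity. Qed.

Theorem theorem1p2 :
  (exists C : R, exists n0 : nat, forall n : nat, (n0 <= n)%nat ->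
     ln (INR (c n)) >= INR n / 4 * (ln (INR n)) ^ 2 - C * INR n * ln (INR n))
  /\ (forall n : nat, (3000 <= n)%nat -> (Nat.pow (n + 1) (n - 1) <= c n)%nat).
Proof.
split.
- exists 0, (Nat.pow 2 18). intros n hn.
  destruct (Comb.part1_peano hn) as [hn1 [l [E [H1 [H2 H3]]]]].
  assert (Rn1 : 1 <= INR n) by (apply (le_INR 1); exact hn1).
  assert (hE : ln (INR (c n)) >= INR E * ln 2).
  { rewrite <- ln_pow by lra. rewrite <- INR_pow2. apply Rle_ge, ln_le'.
    rewrite INR_pow2; apply pow_lt; lra. apply le_INR; exact H1. }
  assert (hb : ln (INR n) <= INR (S l) * ln 2).
  { rewrite <- ln_pow by lra. rewrite <- INR_pow2. apply ln_le'. lra. apply le_INR; lia. }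
  assert (ha : 0 <= ln (INR n)).
  { rewrite <- ln_1. apply ln_le'; lra. }
  assert (H3' : INR n * (INR (S l) * INR (S l)) <= 4 * INR E).
  { rewrite <- !mult_INR. replace 4 with (INR 4) by (simpl; lra). rewrite <- mult_INR. apply le_INR; exact H3. }
  pose proof ln2_lt1. pose proof ln2_pos.
  set (a := ln (INR n)) in *. set (s := ln 2) in *. set (S1 := INR (S l)) in *.
  assert (hS : 0 <= S1) by (unfold S1; apply pos_INR).
  assert (a2 : a ^ 2 <= S1 * S1 * s).
  { assert (a * a <= (S1 * s) * (S1 * s)) by (apply Rmult_le_compat; lra).
    assert (S1 * S1 * (s * s) <= S1 * S1 * s).
    { apply Rmult_le_compat_l. nra. nra. }
    simpl; nra. }
  assert (INR n / 4 * a ^ 2 <= INR n / 4 * (S1 * S1 * s)) by (apply Rmult_le_compat_l; lra).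
  assert (INR n / 4 * (S1 * S1 * s) <= INR E * s) by nra.
  lra.
- intros n hn. exact (Comb.part2_peano hn).
Qed.
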